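(* Let $T$ be a finite triangulation of a $d$-dimensional manifold $N$, equipped with a branching structure. Let $T^k$ denote its set of $k$-simplices, and let $\tilde a\in C^0(N,\mathbb{Z}_2)$. Then, modulo 2, $$\sum_{k=0}^{d}\ \sum_{\langle v_0\cdots v_k\rangle\in T^k}\tilde a(v_0)\tilde a(v_1)\cdots\tilde a(v_k)\ \equiv\ \sum_{j=0}^{d} w_{d-j}\big(\tilde a\cup\underbrace{\delta\tilde a\cup\cdots\cup\delta\tilde a}_{j\text{ times}}\big),$$ where $w_{d-j}\in C_j(N,\mathbb{Z}_2)$ are the chains defined in the context, and $w(\phi)$ denotes the chain–cochain pairing.
   Context: Simplices are written $\langle v_0\cdots v_q\rangle$ with vertices in the order given by the branching structure. The cup product of $\mathbb{Z}_2$-cochains is $$(\alpha\cup\beta)(v_0\cdots v_{p+q})=\alpha(v_0\cdots v_p)\beta(v_p\cdots v_{p+q}),$$ and $(\delta\tilde a)(v_0v_1)=\tilde a(v_0)+\tilde a(v_1)$. For a $q$-simplex $t=\langle 0\,1\cdots q\rangle$ (vertices labelled in branching order) define chains $\partial_p(t)\in C_p(N,\mathbb{Z}_2)$ as follows. - If $p=2k$ is even, $\partial_p(t)=\sum\langle 0,i_1,i_1{+}1,i_2,i_2{+}1,\dots,i_k,i_k{+}1\rangle$, summed over integers with $1\le i_1$, $i_{r+1}\ge i_r+2$ and $i_k\le q-1$. - If $p=2k+1$ is odd, $\partial_p(t)=\sum\langle 0,i_1,i_1{+}1,\dots,i_k,i_k{+}1,q\rangle$, summed over integers with $1\le i_1$,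 $i_{r+1}\ge i_r+2$ and $i_k\le q-2$. In particular $\partial_0(t)=\langle0\rangle$ and $\partial_1(t)=\langle0q\rangle$ for $q\ge1$. Then $$w_{d-p}=\sum_{q\ge p}\ \sum_{t\in T^q}\partial_p(t)\in C_p(N,\mathbb{Z}_2).$$ In particular $w_0$ is the sum of all $d$-simplices. *)

(* Defs.v *)
From mathcomp Require Import all_boot all_order all_algebra.
Set Implicit Arguments. Unset Strict Implicit. Unset Printing Implicit Defensive.
Import GRing.Theory.
Local Open Scope ring_scope.

(* A finite simplicial complex with a branching structure on a finite
   vertex type V is given as a list K of ordered simplices: each simplex is the
   list [:: v_0; ...; v_q] of its vertices written in branching order.
   Z_2-valued p-cochains are functions on such ordered lists (only evaluated on
   lists of length p+1); p-chains are formal sums, represented as lists of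
   ordered simplices (multiplicity taken mod 2 through the pairing). *)

Definition cochain (V : Type) := seq V -> 'F_2.

Definition branched_complex (V : eqType) (d : nat) (K : seq (seq V)) : Prop :=
  [/\ uniq K,
      (forall s, s \in K -> s != [::] /\ uniq s),
      (forall s t, s \in K -> subseq t s -> t != [::] -> t \in K),
      (* each simplex carries exactly one (branching) order *)
      (forall s t, s \in K -> t \in K -> perm_eq s t -> s = t)
    &
      (forall s, s \in K -> (size s <= d.+1)%N) /\
      (exists2 s, s \in K & size s = d.+1)].

Definition c0 (V : Type) (a : V -> 'F_2) : cochain V :=
  fun s => if s is [:: v] then a v else 0.

Definition delta0 (V : Type) (a : V -> 'F_2) : cochain V :=
  fun s => if s is [:: v0; v1] then a v0 + a v1 else 0.

Definition cup (V : Type) (p : nat) (al be : cochain V) : cochain V :=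
  fun s => al (take p.+1 s) * be (drop p s).

Fixpoint cup_delta_pow (V : Type) (a : V -> 'F_2) (j : nat) : cochain V :=
  if j is j'.+1 then cup j' (cup_delta_pow a j') (delta0 a) else c0 a.

Fixpoint gap_seqs (k lo hi : nat) : seq (seq nat) :=
  if k is k'.+1 then
    flatten [seq [seq i :: r | r <- gap_seqs k' i.+2 hi] | i <- iota lo (hi.+1 - lo)]
  else [:: [::]].

(* index list <0, i1, i1+1, ..., ik, ik+1> (even p = 2k)
   or <0, i1, i1+1, ..., ik, ik+1, q> (odd p = 2k+1) *)
Definition bd_indices (p q : nat) : seq (seq nat) :=
  if odd p then
    [seq 0%N :: flatten [seq [:: i; i.+1] | i <- r] ++ [:: q] | r <- gap_seqs p./2 1 (q - 2)]
  else
    [seq 0%N :: flatten [seq [:: i; i.+1] | i <- r] | r <- gap_seqs p./2 1 (q - 1)].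

Definition face_at (V : Type) (t : seq V) (idx : seq nat) : seq V :=
  mask [seq (i \in idx) | i <- iota 0 (size t)] t.

Definition bd_chain (V : Type) (p : nat) (t : seq V) : seq (seq V) :=
  [seq face_at t idx | idx <- bd_indices p (size t).-1].

(* w_{d-p} = sum_{q >= p} sum_{t in T^q} partial_p(t), a p-chain *)
Definition w_chain (V : Type) (K : seq (seq V)) (p : nat) : seq (seq V) :=
  flatten [seq bd_chain p t | t <- K & (p < size t)%N].

Definition pairing (V : Type) (c : seq (seq V)) (phi : cochain V) : 'F_2 :=
  \sum_(s <- c) phi s.

(* Main.v *)
Require Import Defs.
From mathcomp Require Import all_boot all_order all_algebra.
From mathcomp Require Import zify.
Import GRing.Theory.
Local Open Scope ring_scope.
Lemma F2_cases (x : 'F_2) : x = 0 \/ x = 1.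
Proof. case: x => [[|[|n]] Hn]; [left|right|by []]; exact: val_inj. Qed.
Lemma F2_11 : (1 + 1 : 'F_2) = 0. Proof. exact: val_inj. Qed.
Lemma F2_uu (u : 'F_2) : u + u = 0.
Proof. by case: (F2_cases u) => ->; rewrite ?addr0 ?F2_11. Qed.
Lemma F2_key (P : 'F_2 -> 'F_2) x y z : (1+x+z) * P x + (x+y)*(y+z)*P z = (1+x+y)*((1+x+z)*P x).
Proof. case: (F2_cases x) => ->; case: (F2_cases y) => ->; case: (F2_cases z) => ->;
 by rewrite ?addr0 ?add0r ?F2_11 ?mul0r ?mulr0 ?mul1r ?mulr1 ?addr0 ?add0r ?F2_11 ?F2_uu ?mul0r ?mul1r ?F2_uu.
Qed.

Definition pairs (r : seq nat) : seq nat := flatten [seq [:: i; i.+1] | i <- r].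
Fixpoint D (x : 'F_2) (us : seq 'F_2) : 'F_2 :=
  if us is y :: us' then (x + y) * D y us' else 1.

Section S.
Variable f : nat -> 'F_2.

Definition SA k x lo n := \sum_(r <- gap_seqs k lo (lo + n - 2)) D x (map f (pairs r)).
Definition SB k x lo n := if n is 0 then 0 else
  \sum_(r <- gap_seqs k lo (lo + n - 3)) D x (map f (pairs r ++ [:: (lo + n).-1])).

Arguments SA : simpl never.
Arguments SB : simpl never.

Lemma sum_gapS k lo hi (F : seq nat -> 'F_2) :
  \sum_(r <- gap_seqs k.+1 lo hi) F r =
  \sum_(i <- iota lo (hi.+1 - lo)) \sum_(r <- gap_seqs k i.+2 hi) F (i :: r).
Proof. by rewrite /= big_flatten /= big_map; apply: eq_bigr => i _; rewrite big_map. Qed.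

Lemma SA0 x lo n : SA 0 x lo n = 1.
Proof. by rewrite /SA /= big_seq1. Qed.

Lemma SA_small k x lo n : (1 <= lo)%N -> (n <= 1)%N -> SA k.+1 x lo n = 0.
Proof.
move=> hlo hn; rewrite /SA sum_gapS.
have -> : ((lo + n - 2).+1 - lo = 0)%N by lia.
by rewrite big_nil.
Qed.

Lemma SA_rec k x lo n : SA k.+1 x lo n.+2 =
  (x + f lo) * (f lo + f lo.+1) * SA k (f lo.+1) lo.+2 n + SA k.+1 x lo.+1 n.+1.
Proof.
rewrite /SA !sum_gapS.
have -> : ((lo + n.+2 - 2).+1 - lo = n.+1)%N by lia.
have -> : ((lo.+1 + n.+1 - 2).+1 - lo.+1 = n)%N by lia.
have -> : (lo + n.+2 - 2 = lo + n)%N by lia.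
have -> : (lo.+1 + n.+1 - 2 = lo + n)%N by lia.
have -> : (lo.+2 + n - 2 = lo + n)%N by lia.
rewrite /= big_cons big_distrr /=; congr (_ + _).
by apply: eq_bigr => r _; rewrite mulrA.
Qed.

Lemma SB0 x lo n : SB 0 x lo n.+1 = x + f (lo + n).
Proof. by rewrite /SB /= big_seq1 /= mulr1 addnS. Qed.

Lemma SB_small k x lo n : (1 <= lo)%N -> (n <= 2)%N -> SB k.+1 x lo n = 0.
Proof.
move=> hlo hn; rewrite /SB; case: n hn => // n hn; rewrite sum_gapS.
have -> : ((lo + n.+1 - 3).+1 - lo = 0)%N by lia.
by rewrite big_nil.
Qed.

Lemma SB_rec k x lo n : (1 <= lo)%N -> SB k.+1 x lo n.+2 =
  (x + f lo) * (f lo + f lo.+1) * SB k (f lo.+1) lo.+2 n + SB k.+1 x lo.+1 n.+1.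
Proof.
move=> hlo; case: n => [|n].
  by rewrite !SB_small // /SB mulr0 add0r.
rewrite /SB !sum_gapS.
have -> : ((lo + n.+3 - 3).+1 - lo = n.+1)%N by lia.
have -> : ((lo.+1 + n.+2 - 3).+1 - lo.+1 = n)%N by lia.
have -> : (lo + n.+3 - 3 = lo + n)%N by lia.
have -> : (lo.+1 + n.+2 - 3 = lo + n)%N by lia.
have -> : (lo.+2 + n.+1 - 3 = lo + n)%N by lia.
have -> : ((lo + n.+3).-1 = lo + n.+2)%N by lia.
have -> : ((lo.+1 + n.+2).-1 = lo + n.+2)%N by lia.
have -> : ((lo.+2 + n.+1).-1 = lo + n.+2)%N by lia.
rewrite /= big_cons big_distrr /=; congr (_ + _).
by apply: eq_bigr => r _; rewrite mulrA.
Qed.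

Lemma SB0_shift x lo n : SB 0 x lo n.+2 = SB 0 x lo.+1 n.+1.
Proof. by rewrite !SB0 addSnnS. Qed.

Lemma SA_van k : forall n x lo, (1 <= lo)%N -> (n < k.*2)%N -> SA k x lo n = 0.
Proof.
elim: k => [|k IHk] n x lo hlo hn; first by [].
elim/ltn_ind: n x lo hlo hn => n IHn x lo hlo hn.
case: n IHn hn => [|[|n]] IHn hn; try by rewrite SA_small.
rewrite SA_rec IHk // mulr0 add0r IHn //; exact: ltnW.
Qed.

Lemma SB_van k : forall n x lo, (1 <= lo)%N -> (n < k.*2.+1)%N -> SB k x lo n = 0.
Proof.
elim: k => [|k IHk] n x lo hlo hn; first by case: n hn.
elim/ltn_ind: n x lo hlo hn => n IHn x lo hlo hn.
case: n IHn hn => [|[|n]] IHn hn; try by rewrite SB_small.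
rewrite SB_rec // IHk // mulr0 add0r IHn //; exact: ltnW.
Qed.

Lemma bump0 k : bump 0 k = k.+1. Proof. by []. Qed.

Lemma main_id n : forall lo x N, (1 <= lo)%N -> (n < N)%N ->
  \sum_(k < N) (SA k x lo n + SB k x lo n) = \prod_(i <- iota lo n) (1 + x + f i).
Proof.
elim/ltn_ind: n => n IH lo x [|N] hlo hN //.
rewrite big_ord_recl /= SA0; under eq_bigr do rewrite bump0.
case: n IH hN => [|[|m]] IH hN.
- rewrite big1 => [|k _]; last by rewrite SA_small // addr0.
  by rewrite big_nil !addr0.
- rewrite big1 => [|k _]; last by rewrite SA_small // SB_small // addr0.
  by rewrite addr0 SB0 addn0 big_seq1 addrA.
- under eq_bigr do rewrite SA_rec SB_rec //.
  rewrite SB0_shift.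
  have E : forall (a b c d : 'F_2), a + b + (c + d) = (a + c) + (b + d).
    by move=> a b c d; rewrite addrACA.
  under eq_bigr do rewrite E -mulrDr.
  rewrite big_split /= -big_distrr /= (IH m) //; last by lia.
  have T := IH m.+1 (ltnSn _) lo.+1 x N.+1 (ltnW hlo) (ltnW hN).
  rewrite big_ord_recl SA0 in T.
  rewrite [_ * _ + _]addrC addrA T /= !big_cons.

  have := F2_key (fun w => \prod_(i <- iota lo.+2 m) (1 + w + f i)) x (f lo) (f lo.+1).
  by rewrite /=.
Qed.
End S.

Definition gapr (x y : nat) : bool := (x.+2 <= y)%N.

Lemma gap_props k lo hi r : r \in gap_seqs k lo hi ->
  [/\ size r = k, all (fun i => lo <= i <= hi)%N r & sorted gapr r].
Proof.
elim: k lo r => [|k IH] lo r /=.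
  by rewrite inE => /eqP ->.
case/flatten_mapP => i; rewrite mem_iota => hi_ /mapP [r' hr' ->].
have [h1 h2 h3] := IH _ _ hr'.
split => /=; first by rewrite h1.
  apply/andP; split; first by lia.
  by apply: sub_all h2 => j /andP [] ? ?; apply/andP; split => //; lia.
case: r' h2 h3 {hr' h1} => //= j r'' /andP [/andP [hj _] _] ->.
by rewrite andbT /gapr.
Qed.

Arguments gap_props {k lo hi r}.

Lemma path_pairs m r : all (fun i => m < i)%N r -> sorted gapr r -> path ltn m (pairs r).
Proof.
elim: r m => //= i r IH m /andP [hmi _] hs.
rewrite hmi ltnSn /=; apply: IH; last exact: path_sorted hs.
have : all (gapr i) r.
  by apply: order_path_min hs => x y z; rewrite /gapr; lia.
by apply: sub_all => j; rewrite /gapr; lia.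
Qed.

Lemma all_pairs B r : all (fun i => i.+1 < B)%N r -> all (fun i => i < B)%N (pairs r).
Proof. by elim: r => //= i r IH /andP [h1 h2]; rewrite h1 IH // andbT; lia. Qed.

Lemma size_pairs r : size (pairs r) = (size r).*2.
Proof. by elim: r => //= i r IH; rewrite IH doubleS. Qed.

Lemma mask_nth (T : Type) (x0 : T) (b : seq T) m idx :
  sorted ltn idx -> all (fun i => m <= i < m + size b)%N idx ->
  mask [seq i \in idx | i <- iota m (size b)] b = [seq nth x0 b (i - m) | i <- idx].
Proof.
elim: b m idx => [|y b IH] m idx hs ha.
  by case: idx hs ha => //= i idx _ /andP [] /andP []; lia.
have hnth : forall j, (m < j)%N -> nth x0 (y :: b) (j - m) = nth x0 b (j - m.+1).
  by move=> j hj; have -> : (j - m = (j - m.+1).+1)%N by lia.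
case: idx hs ha => [|i idx] hs ha.
  by rewrite /= (IH m.+1 [::]).
have hall : all (fun j => m < j)%N idx.
  move: ha => /= /andP [/andP [hi _] _].
  apply: sub_all (order_path_min ltn_trans hs) => j /=; lia.
have ha' : all (fun j => m.+1 <= j < m.+1 + size b)%N idx.
  move: ha => /= /andP [_ ha]; apply/allP => j hj.
  move/allP: ha => /(_ j hj); move/allP: hall => /(_ j hj) /=; lia.
have hs' : sorted ltn idx := path_sorted hs.
case: (eqVneq i m) => [him|him].
  subst i; rewrite /= inE eqxx /= subnn; congr (_ :: _).
  have -> : [seq nth x0 (y :: b) (i - m) | i <- idx] = [seq nth x0 b (i - m.+1) | i <- idx].
    by apply/eq_in_map => j hj; rewrite hnth //; move/allP: hall => /(_ j hj).
  rewrite -(IH m.+1 idx hs' ha'); congr mask.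
  apply/eq_in_map => j; rewrite mem_iota inE => hj.
  by have -> : (j == m) = false by apply/eqP; lia.
have hmi : (m < i)%N by move: ha => /= /andP [/andP [hi _] _]; lia.
have -> : iota m (size (y :: b)) = m :: iota m.+1 (size b) by [].
have hn : (m \in i :: idx) = false.
  apply/negP; rewrite inE => /orP [/eqP hm|/(allP hall)]; [lia | by rewrite ltnn].
rewrite [in LHS]map_cons hn [mask _ _]/=.
have hall' : all (fun j => m < j)%N (i :: idx) by rewrite /= hmi.
rewrite (IH m.+1 (i :: idx)) //; last first.
  rewrite /= ha' andbT; move: ha => /= /andP [/andP [_ h2] _]; apply/andP; split => //.
  by rewrite addSnnS.
apply/eq_in_map => j hj; rewrite hnth //; exact: (allP hall').
Qed.


Definition G (us : seq 'F_2) : 'F_2 := if us is u :: us' then u * D u us' else 0.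

Lemma D_rcons x us w : D x (rcons us w) = D x us * (last x us + w).
Proof. by elim: us x => [|u us IH] x /=; rewrite ?mul1r ?mulr1 // IH mulrA. Qed.

Lemma G_rcons us u w : G (rcons (rcons us u) w) = G (rcons us u) * (u + w).
Proof.
case: us => [|v us] /=; first by rewrite !mulr1.
by rewrite D_rcons last_rcons mulrA.
Qed.

Lemma cdp_val (V : Type) (a : V -> 'F_2) j s :
  size s = j.+1 -> cup_delta_pow a j s = G (map a s).
Proof.
elim: j s => [|j IH] s.
  by case: s => [|v [|]] //= _; rewrite mulr1.
case/lastP: s => [|s y] //; case/lastP: s => [|s z] //.
rewrite !size_rcons => [[hs]].
rewrite /= /cup.
have -> : take j.+1 (rcons (rcons s z) y) = rcons s z.
  by rewrite -cats1 take_size_cat // size_rcons hs.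
have -> : drop j (rcons (rcons s z) y) = [:: z; y].
  by rewrite -!cats1 -catA drop_size_cat.
rewrite IH ?size_rcons ?hs // !map_rcons G_rcons.
by [].
Qed.

Section Simplex.
Variables (V : Type) (a : V -> 'F_2) (t : seq V) (q : nat).
Hypothesis ht : size t = q.+1.
Hypothesis hq : (1 <= q)%N.

Let f := nth 0 (map a t).
Let Fj j := \sum_(s <- bd_chain j t) cup_delta_pow a j s.

Lemma face_val idx : sorted ltn idx -> all (fun i => i < q.+1)%N idx ->
  map a (face_at t idx) = map f idx.
Proof.
move=> hs ha; rewrite /face_at map_mask -(size_map a t) (@mask_nth _ 0) //.
  by apply/eq_in_map => i _; rewrite subn0.
by apply: sub_all ha => i; rewrite size_map ht.
Qed.

Lemma F_even k : Fj k.*2 = f 0 * SA f k (f 0) 1 q.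
Proof.
rewrite /Fj /bd_chain /bd_indices odd_double doubleK ht /= big_map big_map /SA.
have -> : (1 + q - 2 = q - 1)%N by lia.
rewrite big_distrr /=; apply: eq_big_seq => r hr.
have [hsz hall hsort] := gap_props hr.
have hs : sorted ltn (0%N :: pairs r).
  by apply: path_pairs hsort; apply: sub_all hall => i /andP [].
have ha : all (fun i => i < q.+1)%N (0%N :: pairs r).
  by rewrite /= all_pairs //; apply: sub_all hall => i; lia.
rewrite cdp_val; last by rewrite -(size_map a) face_val //= size_map size_pairs hsz.
by rewrite face_val.
Qed.

Lemma F_odd k : Fj k.*2.+1 = f 0 * SB f k (f 0) 1 q.
Proof.
rewrite /Fj /bd_chain /bd_indices oddS odd_double /= uphalf_double ht /= big_map big_map /SB.
case E: q => [|q']; first by move: hq; rewrite E.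
rewrite -E.
have -> : (1 + q - 3 = q - 2)%N by lia.
have -> : (1 + q).-1 = q by lia.
rewrite big_distrr /=; apply: eq_big_seq => r hr.
have [hsz hall hsort] := gap_props hr.
have hs0 : path ltn 0 (pairs r).
  by apply: path_pairs hsort; apply: sub_all hall => i /andP [].
have hb : all (fun i => i < q)%N (pairs r).
  by rewrite all_pairs //; apply: sub_all hall => i; lia.
have hs : sorted ltn (0%N :: (pairs r ++ [:: q])).
  rewrite /= cat_path hs0 /= andbT.
  have : last 0%N (pairs r) \in 0%N :: pairs r by exact: mem_last.
  by rewrite inE => /orP [/eqP -> //|/(allP hb)].
have ha : all (fun i => i < q.+1)%N (0%N :: (pairs r ++ [:: q])).
  by rewrite /= all_cat /= andbT leqnn andbT; apply: sub_all hb => i; lia.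
rewrite -[cup _ _ _ _]/(cup_delta_pow a k.*2.+1 _).
rewrite cdp_val; last first.
  by rewrite -(size_map a) face_val // size_map /= size_cat size_pairs hsz addn1.
by rewrite face_val.
Qed.
End Simplex.

Lemma sum_double (g : nat -> 'F_2) n :
  \sum_(0 <= j < n.*2) g j = \sum_(0 <= k < n) (g k.*2 + g k.*2.+1).
Proof.
elim: n => [|n IH]; first by rewrite !big_geq.
by rewrite doubleS !big_nat_recr //= IH addrA.
Qed.

Lemma simplex_sum (V : Type) (a : V -> 'F_2) d t : (0 < size t <= d.+1)%N ->
  \sum_(j < d.+1) (if (j < size t)%N then \sum_(s <- bd_chain j t) cup_delta_pow a j s else 0)
  = \prod_(v <- t) a v.
Proof.
move=> /andP [h0 hd].
set Fj := fun j => \sum_(s <- bd_chain j t) cup_delta_pow a j s.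
have [q ht] : exists q, size t = q.+1 by exists (size t).-1; lia.
rewrite -(big_mkord xpredT (fun j => if (j < size t)%N then Fj j else 0)).
rewrite (big_cat_nat (n := q.+1) (leq0n _)) /=; last by rewrite -ht.
rewrite [\sum_(q.+1 <= i < d.+1) _]big1_seq ?addr0; last first.
  move=> j /andP [_]; rewrite mem_index_iota => /andP [h1 _]; case: ifP => // h2; exfalso; lia.
rewrite (eq_big_nat _ _ (F2 := Fj)); last by move=> j; rewrite ht => /andP [_ ->].
case: q ht => [|q] ht.
  rewrite /Fj; clear Fj; case: t ht {h0 hd} => [|v [|]] // _.
  by rewrite big_nat1 /= big_seq1 /bd_chain /bd_indices /= big_seq1 /face_at /=.
set f := nth 0 (map a t).
have hq : (1 <= q.+1)%N by [].
have FE := @F_even _ a t q.+1 ht hq. have FO := @F_odd _ a t q.+1 ht hq.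
have Fz : forall j, (q.+1 < j)%N -> Fj j = 0.
  move=> j; move: (odd_double_half j); move: (j./2) => k.
  case: (odd j) => /= <- hj.
    rewrite -[(1 + k.*2)%N]/(k.*2.+1) in hj *; rewrite /Fj FO SB_van ?mulr0 //; move: hj; rewrite -addnn; lia.
  rewrite -[(0 + k.*2)%N]/(k.*2) in hj *; rewrite /Fj FE. have H := @SA_van (nth 0 [seq a i | i <- t]) k q.+1 (nth 0 [seq a i | i <- t] 0) 1 isT. rewrite H ?mulr0 //; move: hj; rewrite -addnn; lia.
have E : \sum_(0 <= j < (q.+2).*2) Fj j = \sum_(0 <= j < q.+2) Fj j.
  rewrite (big_cat_nat (n := q.+2) (leq0n _)) /=; last by rewrite -addnn; lia.
  by rewrite [\sum_(q.+2 <= i < _) _]big1_seq ?addr0 // => jj /andP [_]; rewrite mem_index_iota => /andP [h1 _]; apply: Fz.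
rewrite -E sum_double.
have FE' : forall k, Fj k.*2 = f 0 * SA f k (f 0) 1 q.+1 := FE.
have FO' : forall k, Fj k.*2.+1 = f 0 * SB f k (f 0) 1 q.+1 := FO.
rewrite (eq_bigr (fun k => f 0 * (SA f k (f 0) 1 q.+1 + SB f k (f 0) 1 q.+1))); last by move=> k _ /=; rewrite FE' FO' mulrDr.
rewrite -big_distrr /= big_mkord main_id //.
have hmap : map a t = [seq f i | i <- iota 0 q.+2].
  by rewrite /f -{1}(mkseq_nth 0 (map a t)) size_map ht.
rewrite -(big_map a xpredT (fun u => u)) hmap big_map.
have -> : iota 0 q.+2 = 0%N :: iota 1 q.+1 by [].
rewrite big_cons.
case: (F2_cases (f 0)) => ->; first by rewrite !mul0r.
by rewrite !mul1r; apply: eq_bigr => i _; rewrite F2_11 add0r.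
Qed.


Theorem proposition5 (d : nat) (V : finType) (K : seq (seq V))
    (hK : branched_complex d K) (a : V -> 'F_2) :
  \sum_(k < d.+1) \sum_(s <- K | size s == k.+1) \prod_(v <- s) a v
  = \sum_(j < d.+1) pairing (w_chain K j) (cup_delta_pow a j).
Proof.
case: hK => _ hne _ _ [hdim _].
have hsz : forall s, s \in K -> (0 < size s <= d.+1)%N.
  move=> s hs; rewrite hdim // andbT lt0n size_eq0; exact: (hne s hs).1.
transitivity (\sum_(s <- K) \prod_(v <- s) a v).
  under eq_bigr do rewrite big_mkcond.
  rewrite exchange_big /=; apply: eq_big_seq => s hs.
  have /andP [h1 h2] := hsz s hs.
  have hlt : ((size s).-1 < d.+1)%N by lia.
  rewrite -big_mkcond /= (big_pred1 (Ordinal hlt)) // => k /=.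
  apply/eqP/eqP => [hk|->]; first by apply: val_inj => /=; lia.
  by rewrite /= prednK.
symmetry.
rewrite /pairing /w_chain.
under eq_bigr do rewrite big_flatten big_map big_filter big_mkcond.
rewrite exchange_big /=; apply: eq_big_seq => t ht.
exact: simplex_sum (hsz t ht).
Qed.
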